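(* Let $n\geq 1$ be an integer with $n\neq 2$. Then $K_n\times H$ is type I for every finite simple bipartite graph $H$.
   Context: All graphs are finite and simple. $K_n$ is the complete graph on $n$ vertices. A total colouring of a graph $G$ is an assignment of colours to the vertices and edges of $G$ such that any two adjacent vertices, any two edges sharing an endpoint, and any edge and each of its endpoints receive different colours. The total chromatic number $\chi''(G)$ is the minimum number of colours in a total colouring of $G$. A graph $G$ with maximum degree $\Delta(G)$ is called type I if $\chi''(G)=\Delta(G)+1$. The direct product $G\times H$ has vertex set $V(G)\times V(H)$, with $(u,v)$ adjacent to $(u',v')$ if and only if $uu'\in E(G)$ and $vv'\in E(H)$. *)

(* Defs.v *)
From mathcomp Require Import all_boot.
Set Implicit Arguments. Unset Strict Implicit. Unset Printing Implicit Defensive.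

Definition simple_graph (V : finType) (e : rel V) : Prop :=
  symmetric e /\ irreflexive e.

Definition complete_rel (n : nat) : rel 'I_n := fun i j => i != j.

Definition direct_prod_rel (V W : finType) (e : rel V) (f : rel W) : rel (V * W) :=
  fun x y => e x.1 y.1 && f x.2 y.2.

Definition bipartite (V : finType) (e : rel V) : Prop :=
  exists side : V -> bool, forall u v, e u v -> side u != side v.

Definition degree (V : finType) (e : rel V) (v : V) : nat := #|[set w | e v w]|.

Definition max_degree (V : finType) (e : rel V) : nat := \max_(v : V) degree e v.

(* A total colouring with k colours: colours of vertices [cv] and of edges
   [ce] (ce u v is the colour of the edge uv, only meaningful when e u v). *)
Definition total_colouring (V : finType) (e : rel V) (k : nat)
    (cv : V -> 'I_k) (ce : V -> V -> 'I_k) : Prop :=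
  [/\ (forall u v, e u v -> ce u v = ce v u),
      (forall u v, e u v -> cv u != cv v),
      (forall u v w, e u v -> e u w -> v != w -> ce u v != ce u w)
    & (forall u v, e u v -> (ce u v != cv u) /\ (ce u v != cv v))].

Definition total_colourable (V : finType) (e : rel V) (k : nat) : Prop :=
  exists (cv : V -> 'I_k) (ce : V -> V -> 'I_k), total_colouring e cv ce.

Definition is_total_chromatic_number (V : finType) (e : rel V) (k : nat) : Prop :=
  total_colourable e k /\ forall k', total_colourable e k' -> k <= k'.

Definition type_I (V : finType) (e : rel V) : Prop :=
  is_total_chromatic_number e (max_degree e).+1.

(* Main.v *)
Require Import Defs.
From mathcomp Require Import all_boot.
From mathcomp Require Import zify.
Set Implicit Arguments. Unset Strict Implicit. Unset Printing Implicit Defensive.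

Definition ILS (n : nat) (L : nat -> nat -> nat) : Prop :=
  [/\ (forall i j, i < n -> j < n -> L i j < n),
      (forall i, i < n -> L i i = i),
      (forall i j j', i < n -> j < n -> j' < n -> L i j = L i j' -> j = j')
    & (forall i i' j, i < n -> i' < n -> j < n -> L i j = L i' j -> i = i')].

Section Half.
Variable m : nat.
Let q := m.*2.+1.
Definition half x := (x * m.+1) %% q.

Lemma half_lt x : half x < q.
Proof. by rewrite ltn_mod. Qed.

Lemma half_modK x : half (x %% q) = half x.
Proof. by rewrite /half modnMml. Qed.

Lemma halfK x : (2 * half x) %% q = x %% q.
Proof.
rewrite /half modnMmr.
have -> : 2 * (x * m.+1) = x * q + x by rewrite /q; lia.
by rewrite modnMDl.
Qed.

Lemma half_inj a b : half a = half b -> a = b %[mod q].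
Proof. by move=> h; rewrite -halfK h halfK. Qed.


Lemma half2 x : half (x + x) = x %% q.
Proof.
rewrite /half.
have -> : (x + x) * m.+1 = x * q + x by rewrite /q; lia.
by rewrite modnMDl.
Qed.
End Half.

Lemma ILS_odd m : ILS m.*2.+1 (fun i j => half m (i + j)).
Proof.
set q := m.*2.+1.
split.
- by move=> i j _ _; apply: half_lt.
- by move=> i hi; rewrite half2 modn_small.
- move=> i j j' hi hj hj' /half_inj /eqP; rewrite eqn_modDl.
  by rewrite !modn_small // => /eqP.
- move=> i i' j hi hi' hj /half_inj /eqP; rewrite eqn_modDr.
  by rewrite !modn_small // => /eqP.
Qed.

Section Even.
Variable m : nat.
Hypothesis m1 : 0 < m.
Let q := m.*2.+1.

Definition Lev i j :=
  if i == q then (if j == q then q else half m (j + j + m.*2))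
  else if j == q then half m (i + i + 1)
  else if j == i.+1 %% q then q else half m (i + j).

Lemma half_cong a b : a = b %[mod q] -> half m a = half m b.
Proof. by move=> h; rewrite -half_modK h half_modK. Qed.

Lemma half_neq_q x : half m x != q.
Proof. exact/negbT/ltn_eqF/half_lt. Qed.

Lemma ILS_even : ILS q.+1 Lev.
Proof.
have hq : q = m.*2.+1 by [].
have hl := half_lt m.
split.
- move=> i j _ _; rewrite /Lev ltnS.
  by do ![case: eqP => _ //=]; rewrite ltnW.
- move=> i; rewrite ltnS leq_eqVlt => /orP[/eqP->|hi]; first by rewrite /Lev !eqxx.
  rewrite /Lev (ltn_eqF hi).
  have -> : (i == i.+1 %% q) = false.
    have [h1|h1] := ltnP i.+1 q.
      by rewrite modn_small // ltn_eqF.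
    have ei : i.+1 = q by apply/eqP; rewrite eqn_leq h1 hi.
    by rewrite ei modnn; apply/negbTE; rewrite -lt0n; move: ei; rewrite hq; lia.
  by rewrite half2 modn_small.
- move=> i j j'; rewrite !ltnS => hi hj hj'.
  rewrite /Lev.
  have [ei|ni] := eqVneq i q.
    have [ej|nj] := eqVneq j q; have [ej'|nj'] := eqVneq j' q; try congruence.
    + by move=> h; move: (half_neq_q (j' + j' + m.*2)); rewrite -h eqxx.
    + by move=> h; move: (half_neq_q (j + j + m.*2)); rewrite h eqxx.
    + move=> /half_inj /eqP; rewrite eqn_modDr => /eqP /half_cong.
      rewrite !half2 !modn_small //; by [rewrite ltn_neqAle nj' hj' | rewrite ltn_neqAle nj hj].
  have iq : i < q by rewrite ltn_neqAle ni hi.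
  have [ej|nj] := eqVneq j q; have [ej'|nj'] := eqVneq j' q; try congruence;
  try (have jq : j < q by rewrite ltn_neqAle nj hj);
  try (have jq' : j' < q by rewrite ltn_neqAle nj' hj').
  + case: eqP => // hs h.
      by move: (half_neq_q (i + i + 1)); rewrite h eqxx.
    move: h => /half_inj /eqP; rewrite -addnA eqn_modDl => /eqP.
    by rewrite (modn_small jq') addn1 => /esym.
  + case: eqP => // hs h.
      by move: (half_neq_q (i + i + 1)); rewrite -h eqxx.
    move: h => /half_inj /eqP; rewrite -addnA eqn_modDl => /eqP.
    by rewrite (modn_small jq) addn1.
  + case: eqP => hs; case: eqP => hs' h; first by rewrite hs hs'.
    * by move: (half_neq_q (i + j')); rewrite -h eqxx.
    * by move: (half_neq_q (i + j)); rewrite h eqxx.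
    * move: h => /half_inj /eqP; rewrite eqn_modDl => /eqP.
      by rewrite !modn_small.
- move=> i i' j; rewrite !ltnS => hi hi' hj.
  rewrite /Lev.
  have [ej|nj] := eqVneq j q.
    have [ei|ni] := eqVneq i q; have [ei'|ni'] := eqVneq i' q; try congruence.
    + by move=> h; move: (half_neq_q (i' + i' + 1)); rewrite -h eqxx.
    + by move=> h; move: (half_neq_q (i + i + 1)); rewrite h eqxx.
    + move=> /half_inj /eqP; rewrite eqn_modDr => /eqP /half_cong.
      rewrite !half2 !modn_small //; by [rewrite ltn_neqAle ni' hi' | rewrite ltn_neqAle ni hi].
  have jq : j < q by rewrite ltn_neqAle nj hj.
  have key : forall x, x < q -> half m (j + j + m.*2) = half m (x + j) -> x.+1 %% q = j.
    move=> x xq /half_inj /eqP; rewrite -addnA [x + j]addnC eqn_modDl => /eqP h.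
    by rewrite -addn1 -modnDml -h modnDml -addnA addn1 -hq modnDr modn_small.
  have [ei|ni] := eqVneq i q; have [ei'|ni'] := eqVneq i' q; try congruence.
  + have iq' : i' < q by rewrite ltn_neqAle ni' hi'.
    case: eqP => hs h; first by move: (half_neq_q (j + j + m.*2)); rewrite h eqxx.
    by case: hs; rewrite key.
  + have iq : i < q by rewrite ltn_neqAle ni hi.
    case: eqP => hs h; first by move: (half_neq_q (j + j + m.*2)); rewrite -h eqxx.
    by case: hs; rewrite key.
  + have iq : i < q by rewrite ltn_neqAle ni hi.
    have iq' : i' < q by rewrite ltn_neqAle ni' hi'.
    case: eqP => hs; case: eqP => hs' h.
    * move: hs'; rewrite hs => /eqP; rewrite -[i.+1]addn1 -[i'.+1]addn1 eqn_modDr => /eqP.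
      by rewrite !modn_small.
    * by move: (half_neq_q (i' + j)); rewrite -h eqxx.
    * by move: (half_neq_q (i + j)); rewrite h eqxx.
    * move: h => /half_inj /eqP; rewrite eqn_modDr => /eqP.
      by rewrite !modn_small.
Qed.
End Even.

Lemma ILS_exists n : n != 2 -> exists L, ILS n L.
Proof.
move=> n2.
case: n n2 => [|n] n2.
  by exists (fun _ _ => 0); split.
have [o|e] := boolP (odd n.+1).
  have -> : n.+1 = (n./2).*2.+1.
    have h := odd_double_half n; move: o => /= /negbTE on.
    by rewrite on add0n in h; rewrite h.
  by exists (fun i j => half n./2 (i + j)); apply: ILS_odd.
case: n n2 e => [|n] // n2 e.
have hm : n.+2 = (n./2).*2.+1.+1.
  have h := odd_double_half n; move: e => /= /negPn /negbTE on.
  by rewrite on add0n in h; rewrite h.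
exists (Lev n./2); rewrite hm; apply: ILS_even.
move: n2 e; rewrite hm /=; case: (n./2) => //.
Qed.

Section Konig.
Variables (W : finType) (s : W -> bool).

Definition proper_ec (g : rel W) (D : nat) (c : W -> W -> nat) : Prop :=
  [/\ (forall x y, g x y -> c x y = c y x),
      (forall x y, g x y -> c x y < D)
    & (forall x y z, g x y -> g x z -> y != z -> c x y != c x z)].

Lemma missing (g : rel W) (c : W -> W -> nat) D x :
  #|[set y | g x y]| < D -> exists2 a, a < D & forall y, g x y -> c x y != a.
Proof.
move=> hd.
set S := [seq c x y | y <- enum [set y | g x y]].
have [/hasP [a] |] := boolP (has (fun a => a \notin S) (iota 0 D)).
  rewrite mem_iota add0n /= => ha haS; exists a => // y gy.
  apply/eqP => ea; move: haS; rewrite -ea; apply/negP/negPn.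
  by apply: map_f; rewrite mem_enum inE.
move/hasPn => h.
have : size (iota 0 D) <= size S.
  apply: uniq_leq_size; first exact: iota_uniq.
  by move=> a /h /negPn.
by rewrite size_iota size_map -cardE leqNgt hd.
Qed.

Definition rm (g : rel W) (u v : W) : rel W :=
  fun x y => g x y && ~~ (((x == u) && (y == v)) || ((x == v) && (y == u))).

Lemma extend (g : rel W) u v D c2 a :
  u != v -> proper_ec (rm g u v) D c2 -> a < D ->
  (forall y, rm g u v u y -> c2 u y != a) ->
  (forall y, rm g u v v y -> c2 v y != a) ->
  proper_ec g D (fun x y => if ((x == u) && (y == v)) || ((x == v) && (y == u))
                            then a else c2 x y).
Proof.
move=> uv [c2s c2l c2p] aD mu mv; split.
- move=> x y gxy.
  have [P|nP] := boolP (((x == u) && (y == v)) || ((x == v) && (y == u))).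
    by rewrite orbC andbC [(y == u) && _]andbC P.
  have -> : (((y == u) && (x == v)) || ((y == v) && (x == u))) = false.
    by apply/negbTE; move: nP; rewrite orbC andbC [(x == u) && _]andbC.
  apply: c2s; rewrite /rm gxy /=.
  by move: nP; rewrite orbC andbC [(x == u) && _]andbC.
- move=> x y gxy; case: ifP => // /negbT nP; apply: c2l; by rewrite /rm gxy.
- move=> x y z gxy gxz yz.
  have [Py|nPy] := boolP (((x == u) && (y == v)) || ((x == v) && (y == u)));
  have [Pz|nPz] := boolP (((x == u) && (z == v)) || ((x == v) && (z == u))).
  + exfalso; move: Py Pz yz.
    by case/orP=> /andP[/eqP-> /eqP->]; case/orP=> /andP[/eqP ex /eqP->];
      rewrite ?eqxx //; move: uv; rewrite ex eqxx.
  + have rz : rm g u v x z by rewrite /rm gxz.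
    rewrite eq_sym.
    by case/orP: Py => /andP[/eqP ex _]; move: rz; rewrite ex => rz;
      [apply: mu | apply: mv].
  + have ry : rm g u v x y by rewrite /rm gxy.
    by case/orP: Pz => /andP[/eqP ex _]; move: ry; rewrite ex => ry;
      [apply: mu | apply: mv].
  + by apply: c2p => //; rewrite /rm ?gxy ?gxz.
Qed.


Lemma side_path (h : rel W) (hs : forall x y, h x y -> s x != s y) p x :
  path h x p -> s (last x p) = (if odd (size p) then ~~ s x else s x).
Proof.
elim: p x => [|y p IH] x //= /andP[hxy hp].
rewrite (IH y hp); move: (hs x y hxy).
by case: (s x); case: (s y); case: (odd (size p)).
Qed.

Section Kempe.
Variables (g : rel W) (D : nat) (c : W -> W -> nat) (al be : nat).
Hypothesis gsym : symmetric g.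
Hypothesis hc : proper_ec g D c.
Hypothesis albe : al != be.
Let h : rel W := fun x y => g x y && ((c x y == al) || (c x y == be)).
Let oth k := if k == al then be else al.

Lemma alt p : forall y x, h y x -> uniq (y :: x :: p) -> path h x p ->
  exists2 z, h (last x p) z &
     c (last x p) z = (if odd (size p) then oth (c y x) else c y x).
Proof.
case: hc => cs cl cp.
elim: p => [|x2 p IH] y x hyx.
  move=> _ _; exists y => /=.
    case/andP: hyx => gyx hc'; have gxy : g x y by rewrite gsym.
    by rewrite /h gxy (cs x y gxy) hc'.
  by apply/esym/cs; case/andP: hyx.
move=> /= hu /andP[hxx2 hp].
have hu' : uniq (x :: x2 :: p) by case/andP: hu.
have yx2 : y != x2 by apply/eqP => e; move: hu; rewrite e /= !inE eqxx !orbT.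
have [z hz ez] := IH x x2 hxx2 hu' hp.
exists z => //; rewrite ez.
have gxy : g x y by case/andP: hyx; rewrite gsym.
have gxx2 : g x x2 by case/andP: hxx2.
have dif := cp x y x2 gxy gxx2 yx2.
have gyx : g y x by case/andP: hyx.
rewrite -(cs y x gyx) in dif.
have Hy : (c y x == al) || (c y x == be) by case/andP: hyx.
have Hx2 : (c x x2 == al) || (c x x2 == be) by case/andP: hxx2.
have alb := negbTE albe.
have beal : (be == al) = false by rewrite eq_sym alb.
have E : c x x2 = oth (c y x).
  rewrite /oth; move: Hy Hx2 dif.
  by case/orP=> /eqP->; case/orP=> /eqP->; rewrite ?eqxx ?alb ?beal.
rewrite E /oth.
rewrite /=; case: (odd (size p)) => /=; move: Hy; case/orP=> /eqP->; rewrite ?eqxx ?alb ?beal.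
all: by rewrite /oth ?eqxx.
Qed.
End Kempe.

Lemma kempe (g : rel W) D c al be u v :
  symmetric g -> (forall x y, g x y -> s x != s y) -> proper_ec g D c ->
  al < D -> be < D -> s u != s v ->
  (forall y, g u y -> c u y != al) -> (forall y, g v y -> c v y != be) ->
  exists c2, [/\ proper_ec g D c2, (forall y, g u y -> c2 u y != al)
                & (forall y, g v y -> c2 v y != al)].
Proof.
move=> gsym hs hc alD beD suv mu mv.
have [allv|] := boolP [forall y, g v y ==> (c v y != al)].
  exists c; split => // y gy; move/forallP: allv => /(_ y); by rewrite gy.
move=> /forallPn [y0]; rewrite negb_imply negbK => /andP[gvy0 /eqP cvy0].
have albe : al != be by apply/eqP => ab; move: (mv y0 gvy0); rewrite cvy0 ab eqxx.
case: (hc) => cs cl cp.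
pose h : rel W := fun x y => g x y && ((c x y == al) || (c x y == be)).
have hsym : symmetric h by move=> x y; rewrite /h gsym; case e: (g y x); rewrite // (cs y x).
pose K x := connect h v x.
have Kh : forall x y, h x y -> K x = K y.
  move=> x y hxy; apply/idP/idP => Kx.
    exact: connect_trans Kx (connect1 hxy).
  by apply: connect_trans Kx (connect1 _); rewrite hsym.
pose sw k := if k == al then be else al.
pose c2 x y := if K x && ((c x y == al) || (c x y == be)) then sw (c x y) else c x y.
have Ku : ~~ K u.
  apply/negP => /connectP [p0 hp0 ep0].
  case: (shortenP hp0) ep0 => p' hp' hu _ ep.
  case: p' hp' hu ep => [|x1 p] /=.
    move=> _ _ euv; move: suv; by rewrite euv eqxx.
  move=> /andP[hvx1 hp] hu eu.
  have cvx1 : c v x1 = al.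
    case/andP: (hvx1) => g1 /orP[/eqP //|/eqP e]; by move: (mv x1 g1); rewrite e eqxx.
  have [z hz ez] := alt gsym hc albe hvx1 hu hp.
  have hs' : forall x y, h x y -> s x != s y by move=> x y /andP[/hs].
  have sp := side_path hs' hp.
  have sx1 : s x1 = ~~ s v by move: (hs' _ _ hvx1); case: (s v); case: (s x1).
  have ev : ~~ odd (size p).
    move: sp; rewrite -eu sx1; move: suv; case: (s u); case: (s v); case: (odd (size p)) => //.
  move: ez; rewrite (negbTE ev) cvx1 -eu => ez.
  by case/andP: hz => guz _; rewrite -eu in guz; move: (mu z guz); rewrite ez eqxx.
have alb := negbTE albe.
have beal : (be == al) = false by rewrite eq_sym alb.
have swK : forall b, involutive (fun k => if b && ((k == al) || (k == be)) then sw k else k).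
  move=> [] k //=; rewrite /sw.
  case: (eqVneq k al) => [->|n1]; first by do 3![rewrite ?eqxx ?beal ?alb ?orbT /=].
  case: (eqVneq k be) => [->|n2]; first by do 3![rewrite ?eqxx ?beal ?alb ?orbT /=].
  by rewrite ?(negbTE n1) ?(negbTE n2) /= ?(negbTE n1) ?(negbTE n2).
have swinj : forall b, injective (fun k => if b && ((k == al) || (k == be)) then sw k else k).
  by move=> b; apply: inv_inj (swK b).
exists c2; split.
- split.
  + move=> x y gxy; rewrite /c2 (cs x y gxy).
    case e: ((c y x == al) || (c y x == be)); rewrite ?andbF ?andbT //.
    have hxy : h x y by rewrite /h gxy (cs x y gxy) e.
    by rewrite (Kh x y hxy).
  + move=> x y gxy; rewrite /c2; case: ifP => _; last exact: cl.
    by rewrite /sw; case: ifP.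
  + move=> x y z gxy gxz yz; apply/negP => /eqP e.
    move/eqP: (cp x y z gxy gxz yz); apply; exact: (swinj (K x)).
- move=> y gy; rewrite /c2 (negbTE Ku) /=; exact: mu.
- move=> y gy; rewrite /c2 /K connect0 /=.
  case: ifP => [/orP[/eqP->|/eqP e]|/negbT].
  + by rewrite /sw eqxx eq_sym.
  + by move: (mv y gy); rewrite e eqxx.
  + by rewrite negb_or => /andP[].
Qed.


Lemma noedge_ec (g : rel W) D : (forall x y, ~~ g x y) -> exists c, proper_ec g D c.
Proof.
move=> ne; exists (fun _ _ => 0); split=> x y; by rewrite (negbTE (ne x y)).
Qed.

Lemma rm_sub (g : rel W) u v x y : rm g u v x y -> g x y.
Proof. by case/andP. Qed.

Lemma konig D N : forall g : rel W, #|[set p : W * W | g p.1 p.2]| <= N ->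
  symmetric g -> (forall x y, g x y -> s x != s y) ->
  (forall x, #|[set y | g x y]| <= D) -> exists c, proper_ec g D c.
Proof.
elim: N => [|N IH] g hN gsym hs hd.
  apply: noedge_ec => x y; apply/negP => gxy.
  have : 0 < #|[set p : W * W | g p.1 p.2]| by apply/card_gt0P; exists (x, y); rewrite inE.
  by move=> h; move: (leq_trans h hN).
case: (pickP [pred p : W * W | g p.1 p.2]) => [[u v] /= guv | none]; last first.
  by apply: noedge_ec => x y; apply/negP => gxy; move: (none (x, y)) => /=; rewrite gxy.
have uv : u != v by apply/eqP => e; move: (hs u v guv); rewrite e eqxx.
set g' := rm g u v.
have g'sym : symmetric g'.
  move=> x y; rewrite /g' /rm gsym; congr (_ && ~~ _).
  by rewrite orbC [(y == v) && _]andbC [(y == u) && _]andbC.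
have hs' : forall x y, g' x y -> s x != s y by move=> x y /rm_sub /hs.
have hd' : forall x, #|[set y | g' x y]| <= D.
  move=> x; apply: leq_trans (hd x); apply: subset_leq_card.
  by apply/subsetP => y; rewrite !inE => /rm_sub.
have hN' : #|[set p : W * W | g' p.1 p.2]| <= N.
  rewrite -ltnS; apply: leq_trans hN; apply: proper_card; apply/properP; split.
    by apply/subsetP => p; rewrite !inE => /rm_sub.
  by exists (u, v); rewrite !inE //= /g' /rm guv !eqxx.
have [c' hc'] := IH g' hN' g'sym hs' hd'.
have degu : #|[set y | g' u y]| < D.
  apply: leq_trans (hd u); apply: proper_card; apply/properP; split.
    by apply/subsetP => y; rewrite !inE => /rm_sub.
  by exists v; rewrite !inE /g' /rm ?guv ?eqxx.
have degv : #|[set y | g' v y]| < D.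
  apply: leq_trans (hd v); apply: proper_card; apply/properP; split.
    by apply/subsetP => y; rewrite !inE => /rm_sub.
  by exists u; rewrite !inE /g' /rm ?(gsym v u) ?guv ?eqxx ?orbT.
have [al alD mu] := missing c' degu.
have [be beD mv] := missing c' degv.
have [c2 [hc2 mu2 mv2]] := kempe g'sym hs' hc' alD beD (hs u v guv) mu mv.
by exists (fun x y => if ((x == u) && (y == v)) || ((x == v) && (y == u))
                      then al else c2 x y); apply: extend.
Qed.
End Konig.

Lemma lower (V : finType) (e : rel V) k x : total_colourable e k -> degree e x < k.
Proof.
case=> cv [ce [cs cvp cp cep]].
set N := [set w | e x w].
have inj : {in N &, injective (ce x)}.
  move=> v w; rewrite !inE => ev ew E; apply/eqP; apply/negPn/negP => vw.
  by move: (cp x v w ev ew vw); rewrite E eqxx.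
have notin : cv x \notin ce x @: N.
  apply/imsetP => [[w]]; rewrite inE => ew E; case: (cep x w ew) => h _.
  by rewrite E eqxx in h.
have := max_card (cv x |: ce x @: N).
by rewrite cardsU1 notin card_in_imset // card_ord.
Qed.

Lemma maxdeg_lt (V : finType) (e : rel V) k (x0 : V) :
  total_colourable e k -> max_degree e < k.
Proof.
case: k => [|k] tc.
  by case: tc => cv _; case: (cv x0).
rewrite ltnS; apply/bigmax_leqP => v _; rewrite -ltnS; exact: lower.
Qed.

Section Main.
Variables (n : nat) (L : nat -> nat -> nat) (D : nat).
Hypothesis hL : ILS n L.

Definition hh i j := if i < j then j - i - 1 else n + j - i - 1.
Definition EE i j k := if k == 0 then L i j else n + (k - 1) * (n - 1) + hh i j.

Lemma hh_lt i j : i < n -> j < n -> i != j -> hh i j < n - 1.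
Proof. rewrite /hh => hi hj /eqP ij; case: (ltnP i j); lia. Qed.

Lemma hh_row i j j' : i < n -> j < n -> j' < n -> i != j -> i != j' -> hh i j = hh i j' -> j = j'.
Proof. rewrite /hh => h1 h2 h3 /eqP h4 /eqP h5; case: (ltnP i j); case: (ltnP i j'); lia. Qed.

Lemma hh_col i i' j : i < n -> i' < n -> j < n -> i != j -> i' != j -> hh i j = hh i' j -> i = i'.
Proof. rewrite /hh => h1 h2 h3 /eqP h4 /eqP h5; case: (ltnP i j); case: (ltnP i' j); lia. Qed.

Lemma EE_bnd i j k : i < n -> j < n -> i != j -> 0 < k ->
  n + (k - 1) * (n - 1) <= EE i j k < n + k * (n - 1).
Proof.
move=> hi hj ij k0; rewrite /EE (negbTE (lt0n_neq0 k0)).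
have := hh_lt hi hj ij.
have -> : k * (n - 1) = (k - 1) * (n - 1) + (n - 1) by case: (k) k0 => // k1 _; rewrite subSS subn0 mulSn addnC.
lia.
Qed.

Lemma EE0 i j k : i < n -> j < n -> k = 0 -> EE i j k < n.
Proof. by case: hL => Lr _ _ _ hi hj ->; rewrite /EE /= Lr. Qed.

Lemma EE_sep i j k i' j' k' : i < n -> j < n -> i != j -> i' < n -> j' < n -> i' != j' ->
  EE i j k = EE i' j' k' -> k = k'.
Proof.
move=> hi hj ij hi' hj' ij' E.
have gen : forall a b, a < b -> EE i j a = EE i' j' b -> False.
  move=> a b ab E'.
  case/andP: (EE_bnd hi' hj' ij' (leq_ltn_trans (leq0n a) ab)) => b1 b2.
  case: (posnP a) => [a0|ap].
    have := EE0 hi hj a0; rewrite E'; lia.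
  case/andP: (EE_bnd hi hj ij ap) => b3 b4.
  have : a * (n - 1) <= (b - 1) * (n - 1) by apply: leq_mul => //; lia.
  lia.
case: (ltngtP k k') => // kk'.
  by case: (gen _ _ kk' E).
exfalso.
case/andP: (EE_bnd hi hj ij (leq_ltn_trans (leq0n k') kk')) => b1 b2.
case: (posnP k') => [k0|kp].
  have := EE0 hi' hj' k0; rewrite -E; lia.
case/andP: (EE_bnd hi' hj' ij' kp) => b3 b4.
have : k' * (n - 1) <= (k - 1) * (n - 1) by apply: leq_mul => //; lia.
lia.
Qed.

Lemma EE_row i j j' k : i < n -> j < n -> j' < n -> i != j -> i != j' ->
  EE i j k = EE i j' k -> j = j'.
Proof.
case: hL => _ _ Lrow _ hi hj hj' ij ij'; rewrite /EE; case: ifP => _.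
  exact: Lrow.
move=> E; apply: (hh_row hi hj hj' ij ij'); lia.
Qed.

Lemma EE_col i i' j k : i < n -> i' < n -> j < n -> i != j -> i' != j ->
  EE i j k = EE i' j k -> i = i'.
Proof.
case: hL => _ _ _ Lcol hi hi' hj ij i'j; rewrite /EE; case: ifP => _.
  exact: Lcol.
move=> E; apply: (hh_col hi hi' hj ij i'j); lia.
Qed.

Lemma EE_neq i j k : i < n -> j < n -> i != j -> (EE i j k != i) && (EE i j k != j).
Proof.
move=> hi hj ij.
case: (posnP k) => [k0|kp]; last first.
  by case/andP: (EE_bnd hi hj ij kp) => b1 b2; apply/andP; split; apply/eqP; lia.
case: hL => _ Ld Lrow Lcol; rewrite /EE k0 /=.
apply/andP; split; apply/eqP => E.
  by move: ij; rewrite (Lrow i j i) // ?eqxx // Ld.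
by move: ij; rewrite (Lcol i j j) // ?eqxx // Ld.
Qed.

End Main.

Lemma inord_neq M a b : a < M.+1 -> b < M.+1 -> a != b -> (inord a : 'I_M.+1) != inord b.
Proof.
move=> ha hb ab; apply/eqP => /(congr1 (@nat_of_ord _)); rewrite !inordK // => /eqP.
by rewrite (negbTE ab).
Qed.

Theorem corollary2 (n : nat) (hn1 : 1 <= n) (hn2 : n != 2)
    (W : finType) (f : rel W) (hW : 0 < #|W|) (hsimple : simple_graph f)
    (hbip : bipartite f) :
  type_I (direct_prod_rel (@complete_rel n) f).
Proof.
have [L hL] := ILS_exists hn2.
have [side hside] := hbip.
case: hsimple => fsym firr.
set D := max_degree f.
have hdeg : forall w, #|[set y | f w y]| <= D by move=> w; exact: (leq_bigmax w).
have [c [cs cl cp]] := @konig W side D _ f (leqnn _) fsym hside hdeg.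
set e := direct_prod_rel (@complete_rel n) f.
have degE : forall i w, degree e (i, w) = (n - 1) * degree f w.
  move=> i w; rewrite /degree.
  have -> : [set y | e (i, w) y] = setX [set~ i] [set y | f w y].
    apply/setP => [[j b]]; rewrite !inE /e /direct_prod_rel /complete_rel /=.
    by rewrite eq_sym.
  by rewrite cardsX cardsC1 card_ord subn1.
set M := max_degree e.
have [w0 ew0] := eq_bigmax (degree f) hW.
have MD : (n - 1) * D <= M.
  rewrite /D /max_degree ew0 -(degE (Ordinal hn1)); exact: (leq_bigmax (Ordinal hn1, w0)).
have /card_gt0P [w1 _] := hW.
have x0 : 'I_n * W := (Ordinal hn1, w1).
split; last first.
  by move=> k tc; apply: (maxdeg_lt x0 tc).
pose E := EE n L.
pose cv (x : 'I_n * W) : 'I_M.+1 := inord x.1.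
pose ce (x y : 'I_n * W) : 'I_M.+1 :=
  inord (if side x.2 then E x.1 y.1 (c x.2 y.2) else E y.1 x.1 (c x.2 y.2)).
exists cv, ce.
have edge : forall x y, e x y -> [/\ x.1 != y.1, f x.2 y.2, side y.2 = ~~ side x.2 & 0 < D].
  move=> [i a] [j b] /andP[/= ij fab]; split => //.
    by move: (hside a b fab); case: (side a); case: (side b).
  exact: leq_ltn_trans (leq0n _) (cl a b fab).
have Elt : forall i j k, i < n -> j < n -> i != j -> k < D -> E i j k < M.+1.
  move=> i j k hi hj ij kD; rewrite ltnS; apply: leq_trans MD.
  case: (posnP k) => [k0|kp].
    have := EE0 hL hi hj k0; rewrite -/E.
    have : n - 1 <= (n - 1) * D by rewrite leq_pmulr //; lia.
    lia.
  case/andP: (EE_bnd L hi hj ij kp) => _ b2.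
  have : (n - 1) * k.+1 <= (n - 1) * D by rewrite leq_mul2l kD orbT.
  have : (n - 1) * k.+1 = k * (n - 1) + (n - 1) by rewrite mulnS addnC mulnC.
  rewrite -/E in b2; lia.
have nM : forall i : 'I_n, 0 < D -> i < M.+1.
  move=> i D0; rewrite ltnS; apply: leq_trans MD.
  have : n - 1 <= (n - 1) * D by rewrite leq_pmulr.
  have := ltn_ord i; lia.
split.
- move=> [i a] [j b] exy; case: (edge _ _ exy) => /= ij fab sb D0.
  rewrite /ce /= sb (cs a b fab); by case: (side a).
- move=> [i a] [j b] exy; case: (edge _ _ exy) => /= ij fab sb D0.
  by apply: inord_neq => //; apply: nM.
- move=> [i a] [j b] [j' b'] exy exz yz.
  case: (edge _ _ exy) => /= ij fab sb D0.
  case: (edge _ _ exz) => /= ij' fab' sb' _.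
  have hi := ltn_ord i; have hj := ltn_ord j; have hj' := ltn_ord j'.
  rewrite /ce /=.
  have kD := cl a b fab; have kD' := cl a b' fab'.
  case: (side a); (apply: inord_neq; [ by apply: Elt; rewrite // eq_sym | by apply: Elt; rewrite // eq_sym | ]).
  1,2: apply/negP => /eqP Ev.
  + case: (eqVneq b b') => [ebb|nbb].
      subst b'; move: yz; rewrite xpair_eqE eqxx andbT => /eqP; apply.
      by apply/val_inj; apply: (EE_row hL _ _ _ _ _ Ev); rewrite // eq_sym.
    move/eqP: (cp a b b' fab fab' nbb); apply.
    by apply: (EE_sep hL _ _ _ _ _ _ Ev); rewrite // eq_sym.
  + case: (eqVneq b b') => [ebb|nbb].
      subst b'; move: yz; rewrite xpair_eqE eqxx andbT => /eqP; apply.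
      by apply/val_inj; apply: (EE_col hL _ _ _ _ _ Ev); rewrite // eq_sym.
    move/eqP: (cp a b b' fab fab' nbb); apply.
    by apply: (EE_sep hL _ _ _ _ _ _ Ev); rewrite // eq_sym.
- move=> [i a] [j b] exy; case: (edge _ _ exy) => /= ij fab sb D0.
  have hi := ltn_ord i; have hj := ltn_ord j.
  have kD := cl a b fab.
  rewrite /ce /cv /=.
  case: (side a).
    case/andP: (EE_neq hL (c a b) hi hj ij) => n1 n2.
    by split; apply: inord_neq => //; [apply: Elt | apply: nM | apply: Elt | apply: nM].
  have ji : j != i by rewrite eq_sym.
  case/andP: (EE_neq hL (c a b) hj hi ji) => n1 n2.
  by split; apply: inord_neq => //; [apply: Elt | apply: nM | apply: Elt | apply: nM].
Qed.
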